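(* For every black-white pairing $\rho$ of $\mathbf N$, $$\mathrm{sign}_c(\mathbf N)\,\mathrm{sign}_{BW}(\rho)\prod_{\{b,w\}\in\rho}\mathrm{sign}(b,w)=(-1)^{\#\text{crossings of }\rho}.$$
   Context: $\mathbf N=\{1,\dots,2n\}$ is a set of nodes (arranged counterclockwise on a circle), each colored black or white, with $n$ of each color. A pairing is a partition into 2-element blocks; $\{a,c\},\{b,d\}$ cross if $a<b<c<d$. Black-white pairing: each pair has one black and one white node; with black nodes $b_1<\dots<b_n$ and white nodes $w_1<\dots<w_n$, $\mathrm{sign}_{BW}(\rho)$ is the sign of the permutation $\theta$ of $\{1,\dots,n\}$ with $\rho(b_i)=w_{\theta(i)}$. A couple of consecutive nodes of the same color is a pair $(m,m+1)$, $m\in\{1,\dots,2n\}$, indices mod $2n$ (so $(2n,1)$ allowed), with $m,m+1$ of the same color. For black $b$ and white $w$, $a_{b,w}$ is the number of $m$ with $\min(b,w)\le m<m+1\le\max(b,w)$ and $m,m+1$ the same color; $\mathrm{sign}(b,w)=(-1)^{(|b-w|+a_{b,w}-1)/2}$ (the exponent is an integer). Let $(n_1,n_1+1),\dots,(n_{2k},n_{2k}+1)$ be all couples, $n_1<\dots<n_{2k}$; $k$ of them are black couples with first elements $s_1<\dots<s_k$ and $k$ are white couples with first elements $u_1<\dots<u_k$. If node $1$ is black, put $\varphi(u_i)=2i-1$, $\varphi(s_i)=2i$; if node 1 is white, put $\varphi(s_i)=2i-1$, $\varphi(u_i)=2i$. Then $\mathrm{sign}_c(\mathbf N)$ is the sign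 of the permutation $(\varphi(n_1),\dots,\varphi(n_{2k}))$ in one-line notation, and $\mathrm{sign}_c(\mathbf N)=1$ if $k=0$. *)

(* Defs.v *)
From HB Require Import structures.
From mathcomp Require Import all_boot all_order all_algebra all_fingroup.
Set Implicit Arguments. Unset Strict Implicit. Unset Printing Implicit Defensive.
Import GRing.Theory Num.Theory.

(* Nodes are the naturals 1..2n; a colouring is col : nat -> bool,
   col x = true meaning "x is black". Only values on 1..2n matter. *)
Definition nodes (n : nat) : seq nat := iota 1 (2 * n).

Definition nsucc (n m : nat) : nat := if m == 2 * n then 1 else m.+1.

Definition blacks (n : nat) (col : nat -> bool) : seq nat :=
  [seq x <- nodes n | col x].
Definition whites (n : nat) (col : nat -> bool) : seq nat :=
  [seq x <- nodes n | ~~ col x].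

(* A black-white pairing, given as the involution x |-> partner of x:
   blocks are {x, rho x}; each block has one black and one white node. *)
Definition is_bw_pairing (n : nat) (col : nat -> bool) (rho : nat -> nat) : Prop :=
  forall x, x \in nodes n ->
    [/\ rho x \in nodes n, rho (rho x) = x & col (rho x) != col x].

(* Sign of a permutation given in one-line notation s (0-based values
   0..size s - 1); 0 if s is not a permutation. *)
Definition seq_sign (s : seq nat) : int :=
  match [pick p : 'S_(size s) | [forall i : 'I_(size s), (p i : nat) == nth 0 s i]] with
  | Some p => (-1) ^+ odd_perm p
  | None => 0
  end.

(* sign_BW: rho(b_i) = w_{theta(i)} *)
Definition bw_theta (n : nat) (col : nat -> bool) (rho : nat -> nat) : seq nat :=
  [seq index (rho (nth 0 (blacks n col) i)) (whites n col) | i <- iota 0 n].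
Definition sign_BW (n : nat) (col : nat -> bool) (rho : nat -> nat) : int :=
  seq_sign (bw_theta n col rho).

Definition a_bw (n : nat) (col : nat -> bool) (b w : nat) : nat :=
  count (fun m => [&& minn b w <= m, m.+1 <= maxn b w & col m == col m.+1])
        (nodes n).
Definition sign_bw (n : nat) (col : nat -> bool) (b w : nat) : int :=
  (-1) ^+ (((maxn b w - minn b w) + a_bw n col b w).-1 %/ 2).

(* couples (m, m+1 mod 2n) of the same colour, identified by first element *)
Definition is_couple (n : nat) (col : nat -> bool) (m : nat) : bool :=
  col m == col (nsucc n m).
Definition couples (n : nat) (col : nat -> bool) : seq nat :=
  [seq m <- nodes n | is_couple n col m].
Definition black_couples (n : nat) (col : nat -> bool) : seq nat :=
  [seq m <- couples n col | col m].
Definition white_couples (n : nat) (col : nat -> bool) : seq nat :=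
  [seq m <- couples n col | ~~ col m].

(* phi, shifted down by one (values 0..2k-1 instead of 1..2k):
   node 1 black: phi(u_i) = 2i-1, phi(s_i) = 2i;
   node 1 white: phi(s_i) = 2i-1, phi(u_i) = 2i  (i 1-based). *)
Definition phi0 (n : nat) (col : nat -> bool) (m : nat) : nat :=
  if col m then (index m (black_couples n col)) * 2 + (col 1)
  else (index m (white_couples n col)) * 2 + (~~ col 1).

Definition sign_c (n : nat) (col : nat -> bool) : int :=
  seq_sign [seq phi0 n col m | m <- couples n col].

Definition crossings (n : nat) (rho : nat -> nat) : nat :=
  \sum_(a <- nodes n) \sum_(b <- nodes n) \sum_(c <- nodes n) \sum_(d <- nodes n)
     [&& a < b, b < c, c < d, rho a == c & rho b == d].

(* Main.v *)
From HB Require Import structures.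
From mathcomp Require Import all_boot all_order all_algebra all_fingroup.
From mathcomp Require Import zify.
Require Import Defs.
Set Implicit Arguments. Unset Strict Implicit. Unset Printing Implicit Defensive.

Definition F4 (l nb cb : nat) (x1 : bool) : bool :=
  odd l./2 (+) odd cb./2 (+) odd nb (+) odd nb./2 (+) (odd l && odd cb)
  (+) (odd cb && x1) (+) (odd nb && x1).
Definition Finv L nb cb x1 := F4 (L %% 4) (nb %% 4) (cb %% 4) x1.

Lemma oddm4 v : odd v = odd (v %% 4).
Proof.
have h1 := modn2 v; have h2 := modn2 (v %% 4).
by case: (odd v) h1; case: (odd (v %% 4)) h2 => //= ? ?; lia.
Qed.

Lemma bit1m4 v : odd v./2 = odd (v %% 4)./2.
Proof.
have h1 := modn2 v./2; have h2 := modn2 (v %% 4)./2.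
case: (odd v./2) h1; case: (odd (v %% 4)./2) h2 => //= h2 h1;
rewrite -!divn2 in h1 h2; lia.
Qed.

Definition I4 := iota 0 4.
Definition BB := [:: true; false].
Lemma step_fin : all (fun l => all (fun nb => all (fun cb => all (fun cw =>
  all (fun x1 : bool => all (fun xL : bool => all (fun c : bool =>
  ((cb + l + x1 + xL) %% 4 == (cw + (nb + nb) + 1) %% 4) ==>
  (F4 ((l.+1) %% 4) ((nb + c) %% 4) ((cb + (xL && c)) %% 4) x1 ==
   F4 l nb cb x1 (+) ((xL && c && odd cw) (+) (~~c && odd nb) (+)
     odd (((l + (cb + (xL && c)) + (cw + (~~xL && ~~c))) %% 4)./2)))) BB) BB) BB) I4) I4) I4) I4.
Proof. by vm_compute. Qed.

Lemma I4P v : v %% 4 \in I4.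
Proof. by rewrite mem_iota /= ltn_pmod. Qed.
Lemma BBP (b : bool) : b \in BB.
Proof. by case: b. Qed.

Lemma step_check L nb cb cw (x1 xL c : bool) : cb + L + x1 + xL = cw + (nb + nb) + 1 ->
 Finv L.+1 (nb + c) (cb + (xL && c)) x1 = Finv L nb cb x1 (+)
   odd ((xL && c) * cw + (~~c) * nb + (L + (cb + (xL && c)) + (cw + (~~xL && ~~c)))./2).
Proof.
move=> H.
have := allP step_fin _ (I4P L) => /allP /(_ _ (I4P nb)) /allP /(_ _ (I4P cb)).
move=> /allP /(_ _ (I4P cw)) /allP /(_ _ (BBP x1)) /allP /(_ _ (BBP xL)) /allP /(_ _ (BBP c)).
have -> : (cb %% 4 + L %% 4 + x1 + xL) %% 4 == (cw %% 4 + (nb %% 4 + nb %% 4) + 1) %% 4.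
  by apply/eqP; lia.
move=> /= /eqP E; rewrite /Finv.
have -> : L.+1 %% 4 = (L %% 4).+1 %% 4 by lia.
have -> : (nb + c) %% 4 = (nb %% 4 + c) %% 4 by lia.
have -> : (cb + (xL && c)) %% 4 = (cb %% 4 + (xL && c)) %% 4 by lia.
rewrite E !oddD !oddM (bit1m4 (L + (cb + (xL && c)) + (cw + (~~ xL && ~~ c)))).
rewrite -(oddm4 cw) -(oddm4 nb).
have -> : (L + (cb + (xL && c)) + (cw + (~~ xL && ~~ c))) %% 4 =
   (L %% 4 + (cb %% 4 + (xL && c)) + (cw %% 4 + (~~ xL && ~~ c))) %% 4 by lia.
by clear H E; case: xL; case: c.
Qed.

Lemma odd_bin2 v : odd 'C(v, 2) = odd v./2.
Proof.
elim: v => // v IH.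
rewrite binS bin1 oddD IH -[v.+1./2]/(uphalf v) uphalf_half oddD.
by case: (odd v); rewrite /= ?addbT ?addbF ?addFb ?addTb.
Qed.

Lemma final_fin : all (fun n => all (fun cb => all (fun cw =>
  all (fun x1 : bool => all (fun xL : bool =>
  ((cb + x1 + xL) %% 4 == (cw + 1) %% 4) ==>
  ~~ (F4 ((n + n) %% 4) n cb x1 (+) (x1 && xL && odd cw)
     (+) odd ((cb + (x1 && xL)) %% 4)./2 (+) (odd (cb + (x1 && xL)) && x1)
     (+) (odd n && x1) (+) odd n./2)) BB) BB) I4) I4) I4.
Proof. by vm_compute. Qed.

Lemma final_check n cb cw (x1 xL : bool) : cb + x1 + xL = cw + 1 ->
  Finv (n + n) n cb x1 (+) (x1 && xL && odd cw) (+) odd 'C(cb + (x1 && xL), 2)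
  (+) (odd (cb + (x1 && xL)) && x1) (+) (odd n && x1) (+) odd 'C(n, 2) = false.
Proof.
move=> H.
have := allP final_fin _ (I4P n) => /allP /(_ _ (I4P cb)).
move=> /allP /(_ _ (I4P cw)) /allP /(_ _ (BBP x1)) /allP /(_ _ (BBP xL)).
have -> : (cb %% 4 + x1 + xL) %% 4 == (cw %% 4 + 1) %% 4 by apply/eqP; lia.
move=> /= /negbTE E; rewrite /Finv !odd_bin2.
rewrite (bit1m4 (cb + _)) (bit1m4 n) (oddm4 cw) (oddm4 n) (oddm4 (cb + _)).
have -> : (n + n) %% 4 = (n %% 4 + n %% 4) %% 4 by clear E; lia.
have -> : (cb + (x1 && xL)) %% 4 = (cb %% 4 + (x1 && xL)) %% 4 by clear E; lia.
by rewrite -(oddm4 (cb %% 4 + _)).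
Qed.

Lemma T_sum k (x1 : bool) :
  \sum_(i < k) \sum_(j < k) (j * 2 + ~~ x1 < i * 2 + x1) = 'C(k, 2) + k * x1.
Proof.
have H : forall i : 'I_k, \sum_(j < k) (j * 2 + ~~ x1 < i * 2 + x1) = i + x1.
  move=> i.
  rewrite (eq_bigr (fun j : 'I_k => nat_of_bool (j < i + x1))); last first.
    by move=> j _; case: x1 => /=; congr nat_of_bool; lia.
  have Hi := ltn_ord i.
  rewrite -(big_mkord xpredT (fun j => nat_of_bool (j < i + x1))).
  rewrite (big_cat_nat _ (n := i + x1)) /=; [|lia|by case: x1; lia].
  rewrite big_nat_cond (eq_bigr (fun _ => 1)); last first.
    by move=> j /andP[/andP[_ ->]].
  rewrite -big_nat_cond sum_nat_const_nat subn0 muln1.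
  rewrite big_nat_cond big1 ?addn0 // => j /andP[/andP[hj _] _].
  by rewrite ltnNge hj.
rewrite (eq_bigr _ (fun i _ => H i)) big_split /= -(big_mkord xpredT (fun i => i)) bin2_sum.
by rewrite sum_nat_const card_ord.
Qed.


Definition nbP (col : nat -> bool) K := count col (iota 1 K.+1).
Definition cbP (col : nat -> bool) K := count (fun m => col m && col m.+1) (iota 1 K).
Definition cwP (col : nat -> bool) K := count (fun m => ~~ col m && ~~ col m.+1) (iota 1 K).
Definition SP (col : nat -> bool) K := \sum_(m <- iota 1 K) ((col m && col m.+1) * cwP col m.-1).
Definition KP (col : nat -> bool) K := \sum_(m <- iota 1 K.+1) (~~ col m * count col (iota 1 m.-1)).
Definition GP (col : nat -> bool) K := \sum_(m <- iota 1 K.+1) (m.-1 + cbP col m.-1 + cwP col m.-1)./2.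

Lemma iotaS_r m n : iota m n.+1 = rcons (iota m n) (m + n).
Proof. by rewrite -addn1 iotaD cats1. Qed.

Lemma prefix_inv col K :
  cbP col K + K.+1 + col 1 + col K.+1 = cwP col K + (nbP col K + nbP col K) + 1 /\
  odd (SP col K + KP col K + GP col K) = Finv K.+1 (nbP col K) (cbP col K) (col 1).
Proof.
elim: K => [|K [IHr IHi]].
  rewrite /cbP /cwP /nbP /SP /KP /GP /= !big_cons !big_nil /=.
  by case: (col 1).
have Enb : nbP col K.+1 = nbP col K + col K.+2.
  by rewrite /nbP iotaS_r -cats1 count_cat /= addn0.
have Ecb : cbP col K.+1 = cbP col K + (col K.+1 && col K.+2).
  by rewrite /cbP iotaS_r -cats1 count_cat /= addn0 add1n.
have Ecw : cwP col K.+1 = cwP col K + (~~ col K.+1 && ~~ col K.+2).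
  by rewrite /cwP iotaS_r -cats1 count_cat /= addn0 add1n.
have ESP : SP col K.+1 = SP col K + (col K.+1 && col K.+2) * cwP col K.
  by rewrite /SP iotaS_r -cats1 big_cat big_seq1 add1n.
have EKP : KP col K.+1 = KP col K + ~~ col K.+2 * nbP col K.
  by rewrite /KP (iotaS_r 1 K.+1) -cats1 big_cat big_seq1 add1n.
have EGP : GP col K.+1 = GP col K + (K.+1 + cbP col K.+1 + cwP col K.+1)./2.
  by rewrite /GP (iotaS_r 1 K.+1) -cats1 big_cat big_seq1 add1n.
split.
  rewrite Ecb Ecw Enb; move: IHr.
  by case: (col K.+1); case: (col K.+2); case: (col 1) => /=; lia.
rewrite Enb Ecb (@step_check (K.+1) _ _ _ (col 1) (col K.+1) (col K.+2) IHr).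
rewrite -IHi ESP EKP EGP Ecb Ecw.
set a := (_ * cwP col K); set b := (_ * nbP col K); set d := (_./2).
set s1 := SP col K; set s2 := KP col K; set s3 := GP col K.
by rewrite -oddD; congr odd; lia.
Qed.


Lemma odd_sum_eq (T : eqType) (s : seq T) (F G : T -> nat) :
  (forall x, x \in s -> odd (F x) = odd (G x)) ->
  odd (\sum_(x <- s) F x) = odd (\sum_(x <- s) G x).
Proof.
elim: s => [|a s IH] H; first by rewrite !big_nil.
rewrite !big_cons !oddD H ?mem_head // IH // => x xs.
by apply: H; rewrite in_cons xs orbT.
Qed.

Lemma odd_sum_all (T : eqType) (s : seq T) (F : T -> nat) :
  (forall x, x \in s -> odd (F x)) -> odd (\sum_(x <- s) F x) = odd (size s).
Proof.
elim: s => [|a s IH] H; first by rewrite !big_nil.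
rewrite big_cons oddD H ?mem_head // IH // => x xs.
by apply: H; rewrite in_cons xs orbT.
Qed.

Lemma pair_sum (T : eqType) (s : seq T) (L : T -> T -> nat) : uniq s ->
  (forall x y, x \in s -> y \in s -> x != y -> odd (L x y + L y x)) ->
  odd (\sum_(x <- s) \sum_(y <- s) L x y) = odd (\sum_(x <- s) L x x) (+) odd 'C(size s, 2).
Proof.
elim: s => [|a s IH] /= Hu H; first by rewrite !big_nil.
move/andP: Hu => [aNs Hu].
have H' : forall x y, x \in s -> y \in s -> x != y -> odd (L x y + L y x).
  by move=> x y xs ys; apply: H; rewrite in_cons ?xs ?ys orbT.
have E1 : \sum_(x <- a :: s) \sum_(y <- a :: s) L x y =
    (L a a + \sum_(y <- s) L a y) + \sum_(x <- s) (L x a + \sum_(y <- s) L x y).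
  by rewrite big_cons big_cons; congr (_ + _); apply: eq_bigr => x _; rewrite big_cons.
rewrite E1 big_split /=.
have Hodd : odd (\sum_(y <- s) L a y + \sum_(x <- s) L x a) = odd (size s).
  rewrite -big_split /=; apply: odd_sum_all => y ys; apply: H.
  - exact: mem_head.
  - by rewrite in_cons ys orbT.
  - by apply: contraNneq aNs => ->.
rewrite big_cons binS bin1 !oddD IH //.
move: Hodd; rewrite oddD.
move: (odd (L a a)) (odd (size s)) (odd (\sum_(x <- s) L x x)) (odd 'C(size s, 2))
  (odd (\sum_(y <- s) L a y)) (odd (\sum_(x <- s) L x a)).
by do 6!case.
Qed.

Lemma sum_pick (T : eqType) (s : seq T) y (P : pred T) : uniq s -> y \in s ->
  \sum_(x <- s) (P x && (y == x)) = P y.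
Proof.
move=> Hu Hy; rewrite (bigD1_seq y) //= eqxx andbT big1 ?addn0 // => x.
by rewrite eq_sym => /negbTE ->; rewrite andbF.
Qed.

Definition Lg a b c d : nat :=
  ((a < c) && (d < b)) + (c < b) + [&& a < c, c < b & b < d] + [&& a < d, d < b & b < c]
  + [&& b < c, c < a & a < d] + [&& b < d, d < a & a < c].

Lemma Lg_pair a b c d : a != b -> a != c -> a != d -> b != c -> b != d -> c != d ->
  odd (Lg a b c d + Lg c d a b).
Proof.
move=> h1 h2 h3 h4 h5 h6; rewrite /Lg.
case: (ltngtP a b) h1 => // _ _; case: (ltngtP a c) h2 => // _ _;
case: (ltngtP a d) h3 => // _ _; case: (ltngtP b c) h4 => // _ _;
case: (ltngtP b d) h5 => // _ _; case: (ltngtP c d) h6 => // _ _; lia.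
Qed.

Lemma sorted_nth_lt (s : seq nat) i j : sorted ltn s -> i < size s -> j < size s ->
  (nth 0 s i < nth 0 s j) = (i < j).
Proof.
move=> Hs hi hj.
have H := sorted_ltn_nth ltn_trans 0 Hs.
case: (ltngtP i j) => h.
- by apply: H.
- by apply/negbTE; rewrite -leqNgt ltnW //; apply: H.
- by rewrite h ltnn.
Qed.

Lemma sorted_index_lt (s : seq nat) x y : sorted ltn s -> x \in s -> y \in s ->
  (index x s < index y s) = (x < y).
Proof.
move=> Hs hx hy.
by rewrite -(sorted_nth_lt Hs) ?index_mem // !nth_index.
Qed.

Definition invs (t : seq nat) : nat :=
  \sum_(i < size t) \sum_(j < size t) ((i < j) && (nth 0 t j < nth 0 t i)).

Lemma invs_map_sorted (s : seq nat) (f : nat -> nat) : sorted ltn s ->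
  invs (map f s) = \sum_(x <- s) \sum_(y <- s) ((x < y) && (f y < f x)).
Proof.
move=> Hs; rewrite /invs size_map (big_nth 0) big_mkord.
apply: eq_bigr => i _; rewrite (big_nth 0) big_mkord.
apply: eq_bigr => j _.
by rewrite !(nth_map 0) // sorted_nth_lt.
Qed.

Lemma perm_iota_of (t : seq nat) : uniq t -> (forall x, x \in t -> x < size t) ->
  perm_eq t (iota 0 (size t)).
Proof.
move=> Hu Hlt; apply: uniq_perm => //; first exact: iota_uniq.
have Hsub : {subset t <= iota 0 (size t)} by move=> x /Hlt; rewrite mem_iota.
have Hsz : size (iota 0 (size t)) <= size t by rewrite size_iota.
by have [_ E] := uniq_min_size Hu Hsub Hsz.
Qed.

Lemma map_index_uniq (s : seq nat) : uniq s -> map (index^~ s) s = iota 0 (size s).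
Proof.
move=> Hu; apply: (@eq_from_nth _ 0); first by rewrite size_map size_iota.
move=> i; rewrite size_map => hi.
by rewrite (nth_map 0) // nth_iota // index_uniq.
Qed.


Lemma sum_count (T : eqType) (r : seq T) (P : pred T) :
  \sum_(x <- r) (P x : nat) = count P r.
Proof. by elim: r => [|x r IH]; rewrite ?big_nil ?big_cons ?IH. Qed.

Lemma sum_filter (T : eqType) (r : seq T) (P : pred T) F :
  \sum_(x <- filter P r) F x = \sum_(x <- r) (P x * F x).
Proof.
elim: r => [|x r IH] /=; first by rewrite !big_nil.
by rewrite [in RHS]big_cons; case: (P x); rewrite ?big_cons IH ?mul1n ?mul0n ?add0n.
Qed.

Lemma count_lt a N s (P : pred nat) : a <= s <= a + N ->
  count (fun u => P u && (u < s)) (iota a N) = count P (iota a (s - a)).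
Proof.
move=> /andP[h1 h2].
have -> : N = (s - a) + (N - (s - a)) by lia.
rewrite iotaD count_cat.
rewrite (@eq_in_count _ _ P (iota a (s - a))); last first.
  by move=> u; rewrite mem_iota subnKC // => /andP[_ ->]; rewrite andbT.
rewrite (@eq_in_count _ _ pred0 (iota (a + (s - a)) _)); last first.
  by move=> u; rewrite mem_iota subnKC // => /andP[hu _]; rewrite ltnNge hu andbF.
by rewrite count_pred0 addn0.
Qed.

Lemma count_same (col : nat -> bool) r :
  count (fun m => col m == col m.+1) r =
  count (fun m => col m && col m.+1) r + count (fun m => ~~ col m && ~~ col m.+1) r.
Proof.
by elim: r => //= m r ->; case: (col m); case: (col m.+1) => /=; lia.
Qed.

Definition Acnt n (col : nat -> bool) x :=
  count (fun m => (m.+1 <= x) && (col m == col m.+1)) (nodes n).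

Section CI.
Variables (n : nat) (col : nat -> bool).
Hypotheses (n0 : 0 < n) (Hc : count col (nodes n) = n).
Let K := (n + n).-1.
Let HK : K.+1 = n + n. Proof. rewrite /K; lia. Qed.
Let HN : nodes n = iota 1 K.+1. Proof. by rewrite /nodes HK mul2n addnn. Qed.
Let HN2 : nodes n = rcons (iota 1 K) K.+1. Proof. by rewrite HN iotaS_r. Qed.

Let Hbc : black_couples n col =
  filter (fun m => col m && col m.+1) (iota 1 K) ++ (if col K.+1 && col 1 then [:: K.+1] else [::]).
Proof.
rewrite /black_couples /couples -filter_predI HN2 -cats1 filter_cat; congr (_ ++ _).
  apply: eq_in_filter => m; rewrite mem_iota => hm /=.
  rewrite /is_couple /nsucc; have -> : (m == 2 * n) = false by lia.
  by case: (col m); case: (col m.+1).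
rewrite /= /is_couple /nsucc; have -> : (K.+1 == 2 * n) by lia.
by case: (col K.+1); case: (col 1).
Qed.

Let Hwc : white_couples n col =
  filter (fun m => ~~ col m && ~~ col m.+1) (iota 1 K) ++
     (if ~~ col K.+1 && ~~ col 1 then [:: K.+1] else [::]).
Proof.
rewrite /white_couples /couples -filter_predI HN2 -cats1 filter_cat; congr (_ ++ _).
  apply: eq_in_filter => m; rewrite mem_iota => hm /=.
  rewrite /is_couple /nsucc; have -> : (m == 2 * n) = false by lia.
  by case: (col m); case: (col m.+1).
rewrite /= /is_couple /nsucc; have -> : (K.+1 == 2 * n) by lia.
by case: (col K.+1); case: (col 1).
Qed.

Let Hrel : cbP col K + col 1 + col K.+1 = cwP col K + 1.
Proof.
have [H _] := prefix_inv col K.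
have Hnb : nbP col K = n by rewrite /nbP -HN.
move: H; rewrite Hnb HK; lia.
Qed.

Lemma size_bc : size (black_couples n col) = cbP col K + (col K.+1 && col 1).
Proof. by rewrite Hbc size_cat size_filter; case: (_ && _). Qed.

Lemma size_couples_eq : size (black_couples n col) = size (white_couples n col).
Proof.
rewrite size_bc Hwc size_cat size_filter -/(cwP col K).
move: Hrel; case: (col 1); case: (col K.+1) => /=; lia.
Qed.

Lemma SC_eq : \sum_(s <- black_couples n col) \sum_(u <- white_couples n col) (u < s)
  = SP col K + (col K.+1 && col 1) * cwP col K.
Proof.
have inner : forall s, 1 <= s <= K.+1 ->
    \sum_(u <- white_couples n col) (u < s) = cwP col s.-1.
  move=> s hs; rewrite sum_count Hwc count_cat.
  have -> : count (fun u => u < s)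
      (if ~~ col K.+1 && ~~ col 1 then [:: K.+1] else [::]) = 0.
    by case: (_ && _) => //=; rewrite ltnNge (proj2 (andP hs)).
  rewrite addn0 count_filter.
  rewrite (@eq_count _ _ (fun u => (~~ col u && ~~ col u.+1) && (u < s))); last first.
    by move=> u /=; rewrite andbC.
  rewrite count_lt; [by rewrite /cwP subn1 | lia].
rewrite Hbc big_cat /=.
rewrite (eq_big_seq (fun s => cwP col s.-1)); last first.
  by move=> s; rewrite mem_filter mem_iota => /andP[_ hs]; apply: inner; lia.
rewrite sum_filter; congr (_ + _).
case: (_ && _); rewrite ?big_seq1 ?big_nil ?mul0n ?mul1n // inner //; lia.
Qed.

Lemma K1_eq : \sum_(w <- whites n col) \sum_(y <- blacks n col) (y < w) = KP col K.
Proof.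
rewrite /whites /blacks.
rewrite (eq_big_seq (fun w => count col (iota 1 w.-1))); last first.
  move=> w; rewrite mem_filter HN mem_iota => /andP[_ hw].
  rewrite sum_count count_filter.
  have -> : count (predI (fun y => y < w) col) (iota 1 K.+1) = count (fun y => col y && (y < w)) (iota 1 K.+1) by apply: eq_count => y /=; rewrite andbC.
  rewrite count_lt ?subn1 //; lia.
by rewrite sum_filter HN.
Qed.

Lemma G_eq : \sum_(x <- nodes n) (x.-1 + Acnt n col x)./2 = GP col K.
Proof.
rewrite /GP -HN; apply: eq_big_seq => x; rewrite HN mem_iota => hx.
rewrite /Acnt HN.
rewrite (@eq_count _ _ (fun m => (col m == col m.+1) && (m < x))); last first.
  by move=> m /=; rewrite andbC.
rewrite count_lt ?subn1; last lia.
by rewrite count_same addnA.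
Qed.

Lemma coloring_identity :
  odd (\sum_(s <- black_couples n col) \sum_(u <- white_couples n col) (u < s))
  (+) odd (\sum_(i < size (black_couples n col)) \sum_(j < size (black_couples n col))
              (j * 2 + ~~ col 1 < i * 2 + col 1))
  (+) odd (\sum_(x <- nodes n) (x.-1 + Acnt n col x)./2)
  (+) (odd n && col 1)
  (+) odd (\sum_(w <- whites n col) \sum_(y <- blacks n col) (y < w))
  (+) odd 'C(n, 2) = false.
Proof.
rewrite SC_eq T_sum G_eq K1_eq size_bc.
have [_ Hi] := prefix_inv col K.
have Hnb : nbP col K = n by rewrite /nbP -HN.
rewrite Hnb HK in Hi.
have := @final_check n (cbP col K) (cwP col K) (col 1) (col K.+1).
move=> /(_ Hrel).
rewrite -Hi (andbC (col K.+1)) !(oddD, oddM, oddb).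
move: (odd (SP col K)) (odd (KP col K)) (odd (GP col K)) (odd 'C(_, 2)) (odd 'C(n, 2)).
move: (odd (cwP col K)) (odd (cbP col K)) (odd n) (col 1) (col K.+1).
by do 10!case.
Qed.
End CI.


Lemma Acnt_split n col lo hi : lo <= hi -> Acnt n col hi = Acnt n col lo +
  count (fun m => [&& lo <= m, m.+1 <= hi & col m == col m.+1]) (nodes n).
Proof.
move=> h; rewrite /Acnt; elim: (nodes n) => //= m s ->.
case: (col m == col m.+1); rewrite ?andbF ?andbT /= ?addn0 ?add0n //.
case: (leqP m.+1 lo) => h1; case: (leqP lo m) => h2; case: (leqP m.+1 hi) => h3 /=; lia.
Qed.

Lemma Acnt1 n col : Acnt n col 1 = 0.
Proof.
rewrite /Acnt (@eq_in_count _ _ pred0) ?count_pred0 // => m.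
by rewrite mem_iota => /andP[h _] /=; rewrite ltnNge h.
Qed.

Lemma Acnt_S n col x : x \in nodes n ->
  Acnt n col x.+1 = Acnt n col x + (col x == col x.+1).
Proof.
move=> hx; rewrite (Acnt_split n col (leqnSn x)); congr (_ + _).
rewrite -sum_count.
rewrite (eq_bigr (fun m => nat_of_bool ((col m == col m.+1) && (x == m)))).
  by rewrite sum_pick // iota_uniq.
by move=> m _; rewrite ltnS andbA -eqn_leq andbC.
Qed.

Lemma odd_q n col x : x \in nodes n -> odd (x.-1 + Acnt n col x) = (col x != col 1).
Proof.
elim: x => [|x IH]; first by rewrite mem_iota.
case: x IH => [|x] IH hx; first by rewrite Acnt1 /= eqxx.
have hx' : x.+1 \in nodes n by move: hx; rewrite !mem_iota; lia.
rewrite Acnt_S //= addnA oddD.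
have := IH hx'; rewrite /= => ->.
by case: (col x.+1); case: (col x.+2); case: (col 1).
Qed.

Lemma arith_half Qh Ql : Ql < Qh -> odd Qh != odd Ql ->
  odd ((Qh - Ql).-1 %/ 2) = odd Qh./2 (+) odd Ql./2 (+) ~~ odd Qh.
Proof.
move=> hlt; have eh := odd_double_half Qh; have el := odd_double_half Ql.
move: eh el; rewrite -!addnn.
case: (odd Qh); case: (odd Ql) => //= eh el _.
  have -> : (Qh - Ql).-1 %/ 2 = Qh./2 - Ql./2 by lia.
  by rewrite oddB ?addbF //; lia.
have -> : (Qh - Ql).-1 %/ 2 = Qh./2 - Ql./2.+1 by lia.
rewrite oddB /=; last lia.
by case: (odd Qh./2); case: (odd Ql./2).
Qed.

Lemma sign_bw_odd n (col : nat -> bool) b w : b \in nodes n -> w \in nodes n -> col b -> ~~ col w ->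
  odd (((maxn b w - minn b w) + a_bw n col b w).-1 %/ 2) =
  odd (b.-1 + Acnt n col b)./2 (+) odd (w.-1 + Acnt n col w)./2 (+) (b < w) (+) col 1.
Proof.
move=> hb hw cb cw.
have qb := @odd_q n col b hb; have qw := @odd_q n col w hw.
have b1 : 0 < b by move: hb; rewrite mem_iota => /andP[].
have w1 : 0 < w by move: hw; rewrite mem_iota => /andP[].
case: (ltngtP b w) => h.
- have Hs := Acnt_split n col (ltnW h).
  have -> : w - b + a_bw n col b w = (w.-1 + Acnt n col w) - (b.-1 + Acnt n col b).
    rewrite /a_bw.
    have -> : minn b w = b by apply/minn_idPl; exact: ltnW.
    have -> : maxn b w = w by apply/maxn_idPr; exact: ltnW.
    lia.
  rewrite arith_half; [|lia|by rewrite qb qw cb (negbTE cw); case: (col 1)].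
  rewrite qw (negbTE cw).
  by case: (col 1); case: (odd (b.-1 + Acnt n col b)./2); case: (odd (w.-1 + Acnt n col w)./2).
- have Hs := Acnt_split n col (ltnW h).
  have -> : b - w + a_bw n col b w = (b.-1 + Acnt n col b) - (w.-1 + Acnt n col w).
    rewrite /a_bw.
    have -> : minn b w = w by apply/minn_idPr; exact: ltnW.
    have -> : maxn b w = b by apply/maxn_idPl; exact: ltnW.
    lia.
  rewrite arith_half; [|lia|by rewrite qb qw cb (negbTE cw); case: (col 1)].
  rewrite qb cb.
  by case: (col 1); case: (odd (b.-1 + Acnt n col b)./2); case: (odd (w.-1 + Acnt n col w)./2).
- by move: cb cw; rewrite h => ->.
Qed.


Section Main.
Variables (n : nat) (col : nat -> bool) (rho : nat -> nat).
Hypotheses (Hc : count col (nodes n) = n) (Hp : is_bw_pairing n col rho).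

Local Notation N := (nodes n).
Local Notation B := (blacks n col).
Local Notation W := (whites n col).

Lemma rhoN x : x \in N -> rho x \in N. Proof. by case/Hp. Qed.
Lemma rhoK x : x \in N -> rho (rho x) = x. Proof. by case/Hp. Qed.
Lemma rho_col x : x \in N -> col (rho x) = ~~ col x.
Proof. by case/Hp => _ _; case: (col x); case: (col (rho x)). Qed.
Lemma memB x : (x \in B) = (x \in N) && col x.
Proof. by rewrite mem_filter andbC. Qed.
Lemma memW x : (x \in W) = (x \in N) && ~~ col x.
Proof. by rewrite mem_filter andbC. Qed.
Lemma uniqN : uniq N. Proof. exact: iota_uniq. Qed.
Lemma uniqB : uniq B. Proof. exact: filter_uniq uniqN. Qed.
Lemma uniqW : uniq W. Proof. exact: filter_uniq uniqN. Qed.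
Lemma sortedN : sorted ltn N. Proof. exact: iota_ltn_sorted. Qed.
Lemma sortedB : sorted ltn B. Proof. by apply: sorted_filter; [exact: ltn_trans | exact: sortedN]. Qed.
Lemma sortedW : sorted ltn W. Proof. by apply: sorted_filter; [exact: ltn_trans | exact: sortedN]. Qed.
Lemma sizeB : size B = n. Proof. by rewrite size_filter. Qed.
Lemma sizeW : size W = n.
Proof.
rewrite size_filter.
have := count_predC col N; rewrite Hc /nodes size_iota.
have -> : count (predC col) N = count (fun x => ~~ col x) N by apply: eq_count.
lia.
Qed.

Lemma rhoB x : x \in B -> rho x \in W.
Proof. by rewrite memB memW => /andP[hx cx]; rewrite rhoN // rho_col // cx. Qed.
Lemma rhoW x : x \in W -> rho x \in B.
Proof. by rewrite memB memW => /andP[hx cx]; rewrite rhoN // rho_col // cx. Qed.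
Lemma BN x : x \in B -> x \in N. Proof. by rewrite memB => /andP[]. Qed.
Lemma WN x : x \in W -> x \in N. Proof. by rewrite memW => /andP[]. Qed.

Lemma permW : perm_eq (map rho B) W.
Proof.
have Hu : uniq (map rho B).
  rewrite map_inj_in_uniq ?uniqB // => x y hx hy E.
  by rewrite -(rhoK (BN hx)) E rhoK // BN.
have Hsub : {subset map rho B <= W} by move=> x /mapP[y hy ->]; exact: rhoB.
have Hsz : size W <= size (map rho B) by rewrite size_map sizeB sizeW.
have [_ E] := uniq_min_size Hu Hsub Hsz.
by apply: uniq_perm => //; exact: uniqW.
Qed.

Lemma sumW (F : nat -> nat) : \sum_(w <- W) F w = \sum_(b <- B) F (rho b).
Proof. by rewrite -(perm_big _ permW) big_map. Qed.

Lemma sumN (F : nat -> nat) : \sum_(x <- N) F x = \sum_(b <- B) (F b + F (rho b)).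
Proof.
have P : perm_eq (filter col N ++ filter (predC col) N) N by rewrite perm_filterC.
have E : filter (predC col) N = W by apply: eq_filter.
rewrite E in P.
by rewrite -(perm_big _ P) big_cat sumW big_split.
Qed.

Definition Fc a b : nat := [&& a < b, b < rho a & rho a < rho b].

Lemma cr_eq : crossings n rho = \sum_(a <- N) \sum_(b <- N) Fc a b.
Proof.
rewrite /crossings; apply: eq_big_seq => a ha; apply: eq_big_seq => b hb.
rewrite (eq_bigr (fun c => nat_of_bool ([&& a < b, b < c & c < rho b] && (rho a == c)))).
  by rewrite sum_pick ?uniqN ?rhoN.
move=> c _.
rewrite (eq_bigr (fun d => nat_of_bool ([&& a < b, b < c, c < d & rho a == c] && (rho b == d)))).
  by rewrite sum_pick ?uniqN ?rhoN // !andbA.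
by move=> d _; rewrite !andbA.
Qed.

Lemma cr_BB : crossings n rho = \sum_(x <- B) \sum_(y <- B)
   (Fc x y + Fc x (rho y) + Fc (rho x) y + Fc (rho x) (rho y)).
Proof.
rewrite cr_eq sumN; apply: eq_bigr => x _; rewrite !sumN -big_split /=.
by apply: eq_bigr => y _; rewrite !addnA.
Qed.

Lemma match_parity :
  odd (\sum_(x <- B) \sum_(y <- B) ((x < y) && (rho y < rho x)) + \sum_(b <- B) (b < rho b)
       + crossings n rho)
  = odd (\sum_(w <- W) \sum_(y <- B) (y < w)) (+) odd 'C(n, 2).
Proof.
have HL := @pair_sum _ B (fun x y => Lg x (rho x) y (rho y)) uniqB.
have Hpair : forall x y, x \in B -> y \in B -> x != y ->
    odd (Lg x (rho x) y (rho y) + Lg y (rho y) x (rho x)).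
  move=> x y hx hy hxy.
  have cx : col x by move: hx; rewrite memB => /andP[].
  have cy : col y by move: hy; rewrite memB => /andP[].
  have crx : col (rho x) = false by rewrite rho_col ?BN // cx.
  have cry : col (rho y) = false by rewrite rho_col ?BN // cy.
  apply: Lg_pair => //.
  - by apply/eqP => E; move: crx; rewrite -E cx.
  - by apply/eqP => E; move: cry; rewrite -E cx.
  - by apply/eqP => E; move: crx; rewrite E cy.
  - by apply: contraNneq hxy => E; rewrite -(rhoK (BN hx)) E rhoK // BN.
  - by apply/eqP => E; move: cry; rewrite -E cy.
move/(_ Hpair): HL; rewrite sizeB.
have E1 : \sum_(x <- B) \sum_(y <- B) Lg x (rho x) y (rho y) =
   \sum_(x <- B) \sum_(y <- B) ((x < y) && (rho y < rho x))
   + \sum_(x <- B) \sum_(y <- B) (y < rho x) + crossings n rho.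
  rewrite cr_BB -!big_split /=; apply: eq_big_seq => x hx.
  rewrite -!big_split /=; apply: eq_big_seq => y hy.
  by rewrite /Lg /Fc !rhoK ?BN //; lia.
have E2 : \sum_(x <- B) Lg x (rho x) x (rho x) = \sum_(b <- B) (b < rho b).
  by apply: eq_bigr => x _; rewrite /Lg !ltnn /= !andbF; lia.
rewrite E1 E2 sumW.
rewrite !oddD.
move: (odd (\sum_(x <- B) \sum_(y <- B) ((x < y) && (rho y < rho x))))
  (odd (\sum_(x <- B) \sum_(y <- B) (y < rho x))) (odd (crossings n rho))
  (odd (\sum_(b <- B) (b < rho b))) (odd 'C(n, 2)).
by do 5!case.
Qed.

End Main.

Import GRing.Theory Num.Theory.


Section A.
Local Open Scope ring_scope.

Lemma odd_perm_inv m (p : 'S_m) :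
  (-1) ^+ p = (-1) ^+ (\sum_(i < m) \sum_(j < m) ((i < j)%N && (p j < p i)%N)) :> int.
Proof.
pose a : 'rV[int]_m := \row_j (nat_of_ord j)%:Z.
pose ap : 'rV[int]_m := \row_j (nat_of_ord (p j))%:Z.
have HV : Vandermonde m ap = col_perm p (Vandermonde m a).
  by apply/matrixP => i j; rewrite !mxE.
have Hd : \det (Vandermonde m ap) = (-1) ^+ p * \det (Vandermonde m a).
  by rewrite HV col_permE det_mulmx det_perm odd_permV mulrC.
rewrite !det_Vandermonde in Hd.
have Hpos : 0 < \prod_(i < m) \prod_(j < m | (i < j)%N) (a 0 j - a 0 i).
  apply: prodr_gt0 => i _; apply: prodr_gt0 => j hij.
  by rewrite !mxE subr_gt0 ltz_nat.
have := congr1 (fun x : int => sgz x) Hd.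
rewrite sgzM (gtr0_sgz Hpos) mulr1.
have -> : sgz ((-1) ^+ p : int) = (-1) ^+ p.
  by case: (odd_perm p); rewrite ?expr1 ?expr0 ?sgzN1 ?sgz1.
move=> <-.
rewrite (big_morph (fun x : int => sgz x) (@sgzM _) (sgz1 _)).
rewrite (big_morph (fun k => (-1) ^+ k : int) (fun x y => exprD (-1) x y) (expr0 _)).
apply: eq_bigr => i _.
rewrite (big_morph (fun x : int => sgz x) (@sgzM _) (sgz1 _)).
rewrite (big_morph (fun k => (-1) ^+ k : int) (fun x y => exprD (-1) x y) (expr0 _)).
rewrite big_mkcond /=; apply: eq_bigr => j _.
case: ifP => hij /=; last by rewrite expr0.
rewrite !mxE.
case: (ltngtP (p j) (p i)) => h.
- by rewrite ltr0_sgz ?expr1 // subr_lt0 ltz_nat.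
- by rewrite gtr0_sgz ?expr0 // subr_gt0 ltz_nat.
- by have /val_inj/(@perm_inj _ p) h2 := h; rewrite h2 ltnn in hij.
Qed.
End A.
Lemma seq_sign_perm t : perm_eq t (iota 0 (size t)) -> seq_sign t = ((-1) ^+ invs t)%R.
Proof.
move=> Ht; rewrite /seq_sign; case: pickP => [q /forallP Hq | Hn].
  rewrite odd_perm_inv /invs; congr (GRing.exp _ _); apply: eq_bigr => i _.
  by apply: eq_bigr => j _; rewrite (eqP (Hq i)) (eqP (Hq j)).
exfalso.
have Hlt : forall i : 'I_(size t), nth 0 t i < size t.
  move=> i; have : nth 0 t i \in iota 0 (size t) by rewrite -(perm_mem Ht) mem_nth.
  by rewrite mem_iota.
have Hu : uniq t by rewrite (perm_uniq Ht) iota_uniq.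
pose f := fun i : 'I_(size t) => Ordinal (Hlt i).
have Hf : injective f.
  move=> i j /(congr1 val); rewrite /f /=.
  move/eqP; rewrite nth_uniq //.
  by move/eqP/val_inj.
have := Hn (perm Hf); move/negP; apply; apply/forallP => i.
by rewrite permE /f.
Qed.


Section SC.
Variables (n : nat) (col : nat -> bool).
Local Notation cs := (couples n col).
Local Notation Bc := (black_couples n col).
Local Notation Wc := (white_couples n col).
Hypothesis Hs : size Bc = size Wc.

Lemma sorted_cs : sorted ltn cs.
Proof. by apply: sorted_filter; [exact: ltn_trans | exact: iota_ltn_sorted]. Qed.
Lemma uniq_cs : uniq cs.
Proof. exact: filter_uniq (iota_uniq _ _). Qed.
Lemma sorted_Bc : sorted ltn Bc.
Proof. by apply: sorted_filter; [exact: ltn_trans | exact: sorted_cs]. Qed.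
Lemma sorted_Wc : sorted ltn Wc.
Proof. by apply: sorted_filter; [exact: ltn_trans | exact: sorted_cs]. Qed.
Lemma uniq_Bc : uniq Bc. Proof. exact: filter_uniq uniq_cs. Qed.
Lemma uniq_Wc : uniq Wc. Proof. exact: filter_uniq uniq_cs. Qed.
Lemma size_cs : size cs = size Bc + size Wc.
Proof.
rewrite [size Bc]size_filter [size Wc]size_filter -(count_predC col cs).
by congr (_ + _); apply: eq_count.
Qed.
Lemma memBc m : (m \in Bc) = (m \in cs) && col m.
Proof. by rewrite mem_filter andbC. Qed.
Lemma memWc m : (m \in Wc) = (m \in cs) && ~~ col m.
Proof. by rewrite mem_filter andbC. Qed.
Lemma phi_B m : m \in Bc -> phi0 n col m = index m Bc * 2 + col 1.
Proof. by rewrite memBc /phi0 => /andP[_ ->]. Qed.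
Lemma phi_W m : m \in Wc -> phi0 n col m = index m Wc * 2 + ~~ col 1.
Proof. by rewrite memWc /phi0 => /andP[_ /negbTE ->]. Qed.

Lemma perm_phi : perm_eq (map (phi0 n col) cs) (iota 0 (size (map (phi0 n col) cs))).
Proof.
apply: perm_iota_of.
  rewrite map_inj_in_uniq ?uniq_cs // => x y hx hy.
  case cx: (col x); case cy: (col y).
  - have hx' : x \in Bc by rewrite memBc hx cx.
    have hy' : y \in Bc by rewrite memBc hy cy.
    rewrite !phi_B // => E; apply: (index_inj 0 hx' hy'); lia.
  - rewrite /phi0 cx cy => E; exfalso; move: E; case: (col 1) => /=; lia.
  - rewrite /phi0 cx cy => E; exfalso; move: E; case: (col 1) => /=; lia.
  - have hx' : x \in Wc by rewrite memWc hx cx.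
    have hy' : y \in Wc by rewrite memWc hy cy.
    rewrite !phi_W // => E; apply: (index_inj 0 hx' hy'); lia.
move=> x /mapP[m hm ->]; rewrite size_map size_cs -Hs.
case cm: (col m).
  have hm' : m \in Bc by rewrite memBc hm cm.
  have := index_mem m Bc; rewrite hm' phi_B //; case: (col 1) => /=; lia.
have hm' : m \in Wc by rewrite memWc hm cm.
have := index_mem m Wc; rewrite hm' phi_W // -Hs; case: (col 1) => /=; lia.
Qed.

Lemma sign_c_eq : sign_c n col = ((-1) ^+ invs (map (phi0 n col) cs))%R.
Proof. by rewrite /sign_c seq_sign_perm // perm_phi. Qed.

Lemma odd_pair2 a b c d : a != b -> c != d ->
  odd (((a < b) && (d < c)) + ((b < a) && (c < d))) = odd ((b < a) + (d < c)).
Proof. by case: (ltngtP a b); case: (ltngtP c d). Qed.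

Lemma sum_index_Bc (F : nat -> nat) :
  \sum_(s <- Bc) F (index s Bc) = \sum_(i < size Bc) F i.
Proof.
by rewrite -(big_map (index^~ Bc) xpredT) map_index_uniq ?uniq_Bc // -(big_mkord xpredT)
  /index_iota subn0.
Qed.
Lemma sum_index_Wc (F : nat -> nat) :
  \sum_(s <- Wc) F (index s Wc) = \sum_(i < size Wc) F i.
Proof.
by rewrite -(big_map (index^~ Wc) xpredT) map_index_uniq ?uniq_Wc // -(big_mkord xpredT)
  /index_iota subn0.
Qed.

Lemma sum_ord_eq k1 k2 (f : nat -> nat) : k1 = k2 ->
  \sum_(j < k1) f j = \sum_(j < k2) f j.
Proof. by move=> ->. Qed.

Lemma invs_c_parity : odd (invs (map (phi0 n col) cs)) =
  odd (\sum_(s <- Bc) \sum_(u <- Wc) (u < s)) (+)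
  odd (\sum_(i < size Bc) \sum_(j < size Bc) (j * 2 + ~~ col 1 < i * 2 + col 1)).
Proof.
rewrite invs_map_sorted ?sorted_cs //.
have P : perm_eq (filter col cs ++ filter (predC col) cs) cs by rewrite perm_filterC.
have E : filter (predC col) cs = Wc by apply: eq_filter.
rewrite E in P.
set F := fun x y => ((x < y) && (phi0 n col y < phi0 n col x) : nat).
have split2 : forall x, \sum_(y <- cs) F x y = \sum_(y <- Bc) F x y + \sum_(y <- Wc) F x y.
  by move=> x; rewrite -(perm_big _ P) big_cat.
rewrite -(perm_big _ P) big_cat /=.
rewrite (eq_bigr (fun x => \sum_(y <- Bc) F x y + \sum_(y <- Wc) F x y)); last by move=> x _; exact: split2.
rewrite [X in _ + X](eq_bigr (fun x => \sum_(y <- Bc) F x y + \sum_(y <- Wc) F x y)); last by move=> x _; exact: split2.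
rewrite !big_split /=.
have BB : \sum_(x <- Bc) \sum_(y <- Bc) F x y = 0.
  rewrite big_seq big1 // => x hx; rewrite big_seq big1 // => y hy.
  rewrite /F !phi_B //.
  case: (ltnP x y) => h //=.
  have := (sorted_index_lt sorted_Bc hx hy); rewrite h => hi.
  apply/eqP; rewrite eqb0 -leqNgt; lia.
have WW : \sum_(x <- Wc) \sum_(y <- Wc) F x y = 0.
  rewrite big_seq big1 // => x hx; rewrite big_seq big1 // => y hy.
  rewrite /F !phi_W //.
  case: (ltnP x y) => h //=.
  have := (sorted_index_lt sorted_Wc hx hy); rewrite h => hi.
  apply/eqP; rewrite eqb0 -leqNgt; lia.
rewrite BB WW add0n addn0 [X in odd (_ + X)]exchange_big -big_split /=.
rewrite (odd_sum_eq (G := fun s => \sum_(u <- Wc) ((u < s) +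
   (index u Wc * 2 + ~~ col 1 < index s Bc * 2 + col 1)))); last first.
  move=> s hs; rewrite -big_split /=; apply: odd_sum_eq => u hu.
  rewrite /F (phi_B hs) (phi_W hu) odd_pair2 //.
    by apply/eqP => E1; move: hs hu; rewrite memBc memWc E1 => /andP[_ ->] /andP[].
  by case: (col 1) => /=; lia.
rewrite [in LHS](eq_bigr (fun s => \sum_(u <- Wc) (u < s) +
   \sum_(u <- Wc) (index u Wc * 2 + ~~ col 1 < index s Bc * 2 + col 1))); last first.
  by move=> s _; rewrite big_split.
rewrite big_split /= oddD; congr (_ (+) odd _).
rewrite (sum_index_Bc (fun i => \sum_(u <- Wc) (index u Wc * 2 + ~~ col 1 < i * 2 + col 1))).
apply: eq_bigr => i _.
by rewrite (sum_index_Wc (fun j => (j * 2 + ~~ col 1 < i * 2 + col 1))); apply: (@sum_ord_eq _ _ (fun j => (j * 2 + ~~ col 1 < i * 2 + col 1))); rewrite Hs.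
Qed.
End SC.


Lemma sum_const_seq (T : eqType) (s : seq T) (c : nat) : \sum_(x <- s) c = size s * c.
Proof. by elim: s => [|x s IH]; rewrite ?big_nil ?big_cons ?IH //= mulSn. Qed.

Lemma seq_sign_nil : seq_sign [::] = 1%R.
Proof. by rewrite seq_sign_perm // /invs big_ord0. Qed.

Lemma main_pos (n : nat) (col : nat -> bool) (rho : nat -> nat) :
  0 < n -> count col (nodes n) = n -> is_bw_pairing n col rho ->
  (sign_c n col * sign_BW n col rho *
    (\prod_(b <- blacks n col) sign_bw n col b (rho b))
  = (-1) ^+ crossings n rho)%R.
Proof.
move=> n0 Hc Hp.
have Hs := size_couples_eq n0 Hc.
set B := blacks n col; set W := whites n col.
have Eth : bw_theta n col rho = map (fun b => index (rho b) W) B.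
  by rewrite /bw_theta -[in RHS](mkseq_nth 0 B) (sizeB Hc) /mkseq -map_comp.
have Pth : perm_eq (bw_theta n col rho) (iota 0 (size (bw_theta n col rho))).
  rewrite Eth; apply: perm_iota_of.
    rewrite map_inj_in_uniq ?uniqB // => x y hx hy E.
    have hx' := rhoB Hp hx; have hy' := rhoB Hp hy.
    have E2 := index_inj 0 hx' hy' E.
    by rewrite -(rhoK Hp (BN hx)) E2 (rhoK Hp (BN hy)).
  move=> t /mapP[b hb ->].
  have := index_mem (rho b) W; rewrite (rhoB Hp hb) (sizeW Hc) => h.
  by rewrite size_map (sizeB Hc).
have Ith : invs (bw_theta n col rho) =
    \sum_(x <- B) \sum_(y <- B) ((x < y) && (rho y < rho x)).
  rewrite Eth invs_map_sorted ?sortedB //; apply: eq_big_seq => x hx.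
  apply: eq_big_seq => y hy.
  by rewrite (sorted_index_lt (sortedW n col)) // rhoB.
rewrite (sign_c_eq Hs) /sign_BW (seq_sign_perm Pth).
have -> : (\prod_(b <- B) sign_bw n col b (rho b) =
   (-1) ^+ \sum_(b <- B) (((maxn b (rho b) - minn b (rho b)) + a_bw n col b (rho b)).-1 %/ 2))%R.
  rewrite /sign_bw.
  by rewrite (big_morph (fun k => (-1) ^+ k : int)%R (fun x y => exprD (-1) x y) (expr0 _)).
rewrite -!exprD -[in LHS]signr_odd -[in RHS]signr_odd; congr (GRing.exp _ _); congr nat_of_bool.
rewrite !oddD (invs_c_parity Hs) Ith.
have HE : odd (\sum_(b <- B) (((maxn b (rho b) - minn b (rho b)) + a_bw n col b (rho b)).-1 %/ 2))
  = odd (\sum_(x <- nodes n) (x.-1 + Acnt n col x)./2) (+) odd (\sum_(b <- B) (b < rho b))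
    (+) (odd n && col 1).
  rewrite (odd_sum_eq (G := fun b => (b.-1 + Acnt n col b)./2 + ((rho b).-1 + Acnt n col (rho b))./2
      + (b < rho b) + col 1)); last first.
    move=> b hb.
    have hbN := BN hb; have hrN := rhoN Hp hbN.
    have cb : col b by move: hb; rewrite memB => /andP[].
    rewrite sign_bw_odd //; last by rewrite (rho_col Hp hbN) cb.
    by rewrite !oddD !oddb.
  have SN := sumN Hc Hp (fun x => (x.-1 + Acnt n col x)./2); rewrite /= in SN.
  rewrite big_split /= in SN; rewrite !big_split /= sum_const_seq (sizeB Hc) -SN.
  by rewrite !oddD oddM oddb.
rewrite HE.
have HM := match_parity Hc Hp.
have HC := coloring_identity n0 Hc.
move: HM HC; rewrite !oddD.
move: (odd (\sum_(x <- B) \sum_(y <- B) ((x < y) && (rho y < rho x))))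
  (odd (\sum_(b <- B) (b < rho b))) (odd (crossings n rho))
  (odd (\sum_(w <- W) \sum_(y <- B) (y < w))) (odd 'C(n, 2)).
move: (odd (\sum_(s <- black_couples n col) \sum_(u <- white_couples n col) (u < s))).
move: (odd (\sum_(i < size (black_couples n col)) \sum_(j < size (black_couples n col))
              (j * 2 + ~~ col 1 < i * 2 + col 1))).
move: (odd (\sum_(x <- nodes n) (x.-1 + Acnt n col x)./2)) (odd n && col 1).
by do 9!case.
Qed.

Local Open Scope ring_scope.

Theorem mainTheorem5 (n : nat) (col : nat -> bool) (rho : nat -> nat) :
  count col (nodes n) = n ->
  is_bw_pairing n col rho ->
  sign_c n col * sign_BW n col rho *
    (\prod_(b <- blacks n col) sign_bw n col b (rho b))
  = (-1) ^+ crossings n rho.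
Proof.
case: n => [|n'] Hc Hp; last by apply: main_pos.
rewrite /sign_c /sign_BW /bw_theta /crossings /couples /blacks /nodes /=.
by rewrite !big_nil seq_sign_nil !mulr1 expr0.
Qed.
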